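(* Let $\rho\in(0,\infty)$ and $d=d(L)$ with $dL\to\theta\in[0,\infty)$. For every $H\in\mathcal D(\mathcal L_\theta)$, $$\lim_{N/L\to\rho}\ \sup_{\eta\in\Omega_{L,N}}\Big|\mathfrak L_{L,N}\big(H\circ\mu_{L,N}^{(\cdot)}\big)(\eta)-(\mathcal L_\theta H)(\mu_{L,N}^{(\eta)})\Big|=0.$$
   Context: Inclusion process: $\Omega_{L,N}=\{\eta\in\mathbb N_0^L:\sum_x\eta_x=N\}$, $\mathfrak L_{L,N}f(\eta)=\sum_{x\ne y}\eta_x(d+\eta_y)[f(\eta^{x,y})-f(\eta)]$, $\eta^{x,y}=\eta-e^x+e^y$; ''$N/L\to\rho$'' means $N,L\to\infty$ with $N/L\to\rho$. $\mu^{(\eta)}_{L,N}=\sum_x\frac{\eta_x}N\delta_{\eta_x/N}$. $\overline\nabla=\{p\in[0,1]^{\mathbb N}:p_1\ge p_2\ge\dots,\sum p_i\le1\}$, $\mu^{(p)}=(1-\|p\|_1)\delta_0+\sum_ip_i\delta_{p_i}$, $E=\{\mu^{(p)}:p\in\overline\nabla\}$ (note $\mu^{(\eta)}_{L,N}\in E$). $Bh=(zh)'$; $A_\theta h(z)=z(1-z)h''+(2-(2+\theta)z)h'+\theta(h(0)-h(z))$; $\mathcal D(\mathcal L_\theta)$ = subalgebra of $C(E)$ generated by $\mu\mapsto\mu(h)$, $h\in C^3([0,1])$, with $\mathcal L_\theta\prod_{k=1}^n\mu(h_k)=2\sum_{k<l}(\mu(Bh_kBh_l)-\mu(Bh_k)\mu(Bh_l))\prod_{j\ne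 k,l}\mu(h_j)+\sum_k\mu(A_\theta h_k)\prod_{j\ne k}\mu(h_j)$, extended linearly. *)

(* Defs.v *)
From Stdlib Require Import Reals Lra Lia List.
From Coquelicot Require Import Coquelicot.
Open Scope R_scope.

Fixpoint rsum (n : nat) (f : nat -> R) : R :=
  match n with O => 0 | S m => rsum m f + f m end.
Fixpoint rprod (n : nat) (f : nat -> R) : R :=
  match n with O => 1 | S m => rprod m f * f m end.
Fixpoint nsum (n : nat) (f : nat -> nat) : nat :=
  match n with O => 0%nat | S m => (nsum m f + f m)%nat end.

(* h in C^3([0,1]): represented by a C^3 function on R (every C^3([0,1])
   function extends to a C^3 function on R, and only values on [0,1] matter). *)
Definition C3 (h : R -> R) : Prop :=
  (forall (k : nat) (x : R), (k <= 3)%nat -> ex_derive_n h k x) /\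
  (forall x : R, continuous (Derive_n h 3) x).

Definition Bop (h : R -> R) : R -> R := fun z => Derive (fun t => t * h t) z.

Definition Aop (theta : R) (h : R -> R) : R -> R := fun z =>
  z * (1 - z) * Derive_n h 2 z + (2 - (2 + theta) * z) * Derive h z
  + theta * (h 0 - h z).

(* An element of D(L_theta) given as a finite linear combination of finite
   products of the functionals mu |-> mu(h): list of (coefficient, factors). *)
Definition dpoly := list (R * list (R -> R)).

(* ev plays the role of a measure mu: ev g = mu(g). *)
Definition mon_eval (ev : (R -> R) -> R) (hs : list (R -> R)) : R :=
  fold_right (fun h acc => ev h * acc) 1 hs.

Definition H_eval (ev : (R -> R) -> R) (P : dpoly) : R :=
  fold_right (fun m acc => fst m * mon_eval ev (snd m) + acc) 0 P.

Definition hzero : R -> R := fun _ => 0.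

(* L_theta applied to prod_{k<n} mu(h_k), evaluated at mu *)
Definition Lmon (theta : R) (ev : (R -> R) -> R) (hs : list (R -> R)) : R :=
  let n := length hs in
  let h := fun k => nth k hs hzero in
  2 * rsum n (fun k => rsum n (fun l =>
        if (k <? l)%nat then
          (ev (fun z => Bop (h k) z * Bop (h l) z) - ev (Bop (h k)) * ev (Bop (h l)))
          * rprod n (fun j => if orb (j =? k)%nat (j =? l)%nat then 1 else ev (h j))
        else 0))
  + rsum n (fun k => ev (Aop theta (h k))
        * rprod n (fun j => if (j =? k)%nat then 1 else ev (h j))).

Definition LH (theta : R) (ev : (R -> R) -> R) (P : dpoly) : R :=
  fold_right (fun m acc => fst m * Lmon theta ev (snd m) + acc) 0 P.

(* Configurations: eta : nat -> nat, sites 0..L-1. *)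
Definition mu_eta (L N : nat) (eta : nat -> nat) (g : R -> R) : R :=
  rsum L (fun x => INR (eta x) / INR N * g (INR (eta x) / INR N)).

Definition jump (eta : nat -> nat) (x y : nat) : nat -> nat := fun z =>
  if (z =? x)%nat then (eta z - 1)%nat
  else if (z =? y)%nat then (eta z + 1)%nat else eta z.

(* Generator of the inclusion process applied to f at eta *)
Definition gen (L : nat) (d : R) (f : (nat -> nat) -> R) (eta : nat -> nat) : R :=
  rsum L (fun x => rsum L (fun y =>
    if (x =? y)%nat then 0
    else INR (eta x) * (d + INR (eta y)) * (f (jump eta x y) - f eta))).

(* Main.v *)
Require Import Defs.
From Stdlib Require Import Reals Lra Lia List Psatz.
From Coquelicot Require Import Coquelicot.
Open Scope R_scope.

Lemma bounded_cont (f : R -> R) : (forall t, -1 <= t <= 2 -> continuous f t) ->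
  exists M, 0 <= M /\ forall t, -1 <= t <= 2 -> Rabs (f t) <= M.
Proof.
  intros Hc.
  destruct (continuity_ab_maj (fun t => Rabs (f t)) (-1) 2) as [Mx [HM _]]. lra.
  intros c Hc'. apply (continuity_pt_comp f Rabs). apply continuity_pt_filterlim. apply Hc; auto.
  apply Rcontinuity_abs.
  exists (Rabs (f Mx)); split. apply Rabs_pos. intros; apply HM; auto.
Qed.

Lemma C3_bounds h : C3 h -> exists M, 0 <= M /\ forall t, -1 <= t <= 2 ->
  Rabs (h t) <= M /\ Rabs (Derive h t) <= M /\ Rabs (Derive_n h 2 t) <= M /\ Rabs (Derive_n h 3 t) <= M.
Proof.
  intros [Hd Hc].
  assert (Hk : forall k, (k <= 2)%nat -> forall t, -1 <= t <= 2 -> continuous (Derive_n h k) t).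
  { intros k Hk t _. exact (ex_derive_continuous (Derive_n h k) t (Hd (S k) t ltac:(lia))). }
  destruct (bounded_cont _ (Hk 0%nat ltac:(lia))) as [M0 [P0 H0]].
  destruct (bounded_cont _ (Hk 1%nat ltac:(lia))) as [M1 [P1 H1]].
  destruct (bounded_cont _ (Hk 2%nat ltac:(lia))) as [M2 [P2 H2]].
  destruct (bounded_cont (Derive_n h 3) (fun t _ => Hc t)) as [M3 [P3 H3]].
  exists (M0+M1+M2+M3). split. lra. intros t Ht.
  specialize (H0 t Ht); specialize (H1 t Ht); specialize (H2 t Ht); specialize (H3 t Ht).
  simpl in H0, H1. change (Derive (fun x : R => h x) t) with (Derive h t) in H1. repeat split; lra.
Qed.

Lemma taylor2 h : C3 h -> exists K, 0 <= K /\ forall a s, 0 <= a <= 1 -> -1 <= s <= 1 ->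
  Rabs (h (a+s) - h a - s * Derive h a - s^2/2 * Derive_n h 2 a) <= K * Rabs s ^ 3.
Proof.
  intros HC. destruct (C3_bounds h HC) as [M [HM0 HM]]. destruct HC as [Hd _].
  exists M. split; auto. intros a s Ha Hs.
  destruct (Rtotal_order s 0) as [Hneg|[Hz|Hpos]].
  - destruct (Taylor_Lagrange (fun y => h (- y)) 2 (-a) (-a - s)) as [z [Hz Heq]]. lra.
    { intros t _ k Hk. apply ex_derive_n_comp_opp. apply filter_forall. intros y k' Hk'. apply Hd. lia. }
    cbn [sum_f_R0] in Heq.
    rewrite !Derive_n_comp_opp in Heq; try (apply filter_forall; intros y k' Hk'; apply Hd; lia).
    replace (- (-a - s)) with (a+s) in Heq by ring.
    rewrite Ropp_involutive in Heq.
    change (Derive_n h 0 a) with (h a) in Heq. change (Derive_n h 1 a) with (Derive h a) in Heq.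
    replace (INR (Factorial.fact 0)) with 1 in Heq by (simpl; ring).
    replace (INR (Factorial.fact 1)) with 1 in Heq by (simpl; ring).
    replace (INR (Factorial.fact 2)) with 2 in Heq by (simpl; ring).
    replace (INR (Factorial.fact 3)) with 6 in Heq by (simpl; ring).
    destruct (HM (-z) ltac:(lra)) as (_&_&_&H3).
    rewrite Heq. 
    match goal with |- Rabs ?e <= _ => replace e with (s^3/6 * Derive_n h 3 (-z)) by (field) end.
    rewrite Rabs_mult, RPow_abs. rewrite Rabs_div; [|lra]. rewrite (Rabs_right 6) by lra.
    assert (0 <= Rabs (s ^3)) by (apply Rabs_pos). nra.
  - subst s. replace (a+0) with a by ring. replace (h a - h a - 0 * Derive h a - 0 ^ 2 / 2 * Derive_n h 2 a) with 0 by field. rewrite Rabs_R0. simpl; nra.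
  - destruct (Taylor_Lagrange h 2 a (a + s)) as [z [Hz Heq]]. lra.
    { intros t _ k Hk. apply Hd. lia. }
    cbn [sum_f_R0] in Heq.
    change (Derive_n h 0 a) with (h a) in Heq. change (Derive_n h 1 a) with (Derive h a) in Heq.
    replace (INR (Factorial.fact 0)) with 1 in Heq by (simpl; ring).
    replace (INR (Factorial.fact 1)) with 1 in Heq by (simpl; ring).
    replace (INR (Factorial.fact 2)) with 2 in Heq by (simpl; ring).
    replace (INR (Factorial.fact 3)) with 6 in Heq by (simpl; ring).
    destruct (HM z ltac:(lra)) as (_&_&_&H3).
    rewrite Heq. 
    match goal with |- Rabs ?e <= _ => replace e with (s^3/6 * Derive_n h 3 z) by (field) end.
    rewrite Rabs_mult, RPow_abs. rewrite Rabs_div; [|lra]. rewrite (Rabs_right 6) by lra.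
    assert (0 <= Rabs (s ^3)) by (apply Rabs_pos). nra.
Qed.

Definition Cf (h : R -> R) (a : R) := Derive h a + a * Derive_n h 2 a / 2.

Lemma Bop_eq h a : C3 h -> Bop h a = h a + a * Derive h a.
Proof.
  intros [Hd _]. unfold Bop. rewrite Derive_mult.
  - replace (Derive (fun x : R => x) a) with 1. ring. symmetry. apply (Derive_id a).
  - apply ex_derive_id.
  - apply (Hd 1%nat a). lia.
Qed.

Lemma Aop_eq th h a : C3 h -> Aop th h a = 2 * (1 - a) * Cf h a + th * (h 0 - Bop h a).
Proof. intros HC. rewrite Bop_eq by auto. unfold Aop, Cf. field. Qed.

Lemma hconst h : C3 h -> exists K, 0 <= K /\ forall a s, 0 <= a <= 1 -> -1 <= s <= 1 ->
  Rabs (h a) <= K /\ Rabs (Bop h a) <= K /\ Rabs (Cf h a) <= K /\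
  Rabs (Bop h a - h 0) <= K * a /\
  Rabs ((a+s) * h (a+s) - a * h a - s * Bop h a - s^2 * Cf h a) <= K * Rabs s ^ 3.
Proof.
  intros HC. destruct (C3_bounds h HC) as [M [HM0 HM]].
  destruct (taylor2 h HC) as [K [HK0 HK]].
  exists (3*K + 3*M). split. lra. intros a s Ha Hs.
  destruct (HM a ltac:(lra)) as (H0&H1&H2&_).
  destruct (HM 0 ltac:(lra)) as (H00&H10&H20&_).
  assert (Ht := HK a s Ha Hs).
  assert (Ht0 := HK 0 a ltac:(lra) ltac:(lra)).
  rewrite !Bop_eq by auto. unfold Cf.
  assert (Has : Rabs s <= 1) by (apply Rabs_le; lra).
  assert (Hs0 : 0 <= Rabs s) by apply Rabs_pos.
  repeat split.
  - lra.
  - eapply Rle_trans. apply Rabs_triang. rewrite Rabs_mult. rewrite (Rabs_right a) by lra. nra.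
  - eapply Rle_trans. apply Rabs_triang. unfold Rdiv. rewrite !Rabs_mult.
    rewrite (Rabs_right a) by lra. rewrite (Rabs_right (/2)) by lra. nra.
  - replace (h a + a * Derive h a - h 0) with
       ((h (0 + a) - h 0 - a * Derive h 0 - a ^ 2 / 2 * Derive_n h 2 0)
        + a * Derive h 0 + a^2/2 * Derive_n h 2 0 + a * Derive h a) by (replace (0+a) with a by ring; ring).
    rewrite (Rabs_right a) in Ht0 by lra.
    apply Rabs_le. apply Rabs_le_between in Ht0. apply Rabs_le_between in H10. apply Rabs_le_between in H20.
    apply Rabs_le_between in H1.
    assert (a^3 <= a) by (simpl; nra). assert (a^2 <= a) by (simpl; nra). assert (0 <= a^2) by nra.
    split; nra.
  - set (e := h (a + s) - h a - s * Derive h a - s ^ 2 / 2 * Derive_n h 2 a) in *.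
    replace ((a + s) * h (a + s) - a * h a - s * (h a + a * Derive h a) -
      s ^ 2 * (Derive h a + a * Derive_n h 2 a / 2)) with ((a+s) * e + s^3/2 * Derive_n h 2 a)
      by (unfold e; field).
    eapply Rle_trans. apply Rabs_triang. rewrite !Rabs_mult. unfold Rdiv. rewrite !Rabs_mult.
    rewrite <- RPow_abs. rewrite (Rabs_right (/2)) by lra.
    assert (Rabs (a+s) <= 2) by (apply Rabs_le; lra).
    assert (0 <= Rabs s ^3) by (apply pow_le; auto).
    assert (0 <= Rabs e) by apply Rabs_pos.
    assert (0 <= Rabs (Derive_n h 2 a)) by apply Rabs_pos.
    nra.
Qed.

Lemma rsum_ext n f g : (forall i, (i < n)%nat -> f i = g i) -> rsum n f = rsum n g.
Proof. induction n; simpl; intros H; auto. rewrite H by lia. f_equal. apply IHn. intros; apply H; lia. Qed.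
Lemma rsum_plus n f g : rsum n (fun i => f i + g i) = rsum n f + rsum n g.
Proof. induction n; simpl; [ring| rewrite IHn; ring]. Qed.
Lemma rsum_minus n f g : rsum n (fun i => f i - g i) = rsum n f - rsum n g.
Proof. induction n; simpl; [ring| rewrite IHn; ring]. Qed.
Lemma rsum_scal_l n c f : rsum n (fun i => c * f i) = c * rsum n f.
Proof. induction n; simpl; [ring| rewrite IHn; ring]. Qed.
Lemma rsum_scal_r n c f : rsum n (fun i => f i * c) = rsum n f * c.
Proof. induction n; simpl; [ring| rewrite IHn; ring]. Qed.
Lemma rsum_0 n : rsum n (fun _ => 0) = 0.
Proof. induction n; simpl; [ring| rewrite IHn; ring]. Qed.
Lemma rsum_const n c : rsum n (fun _ => c) = INR n * c.
Proof. induction n; simpl rsum; [simpl; ring| rewrite IHn, S_INR; ring]. Qed.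
Lemma rsum_abs n f : Rabs (rsum n f) <= rsum n (fun i => Rabs (f i)).
Proof. induction n; simpl. rewrite Rabs_R0; lra.
  eapply Rle_trans. apply Rabs_triang. lra. Qed.
Lemma rsum_le n f g : (forall i, (i<n)%nat -> f i <= g i) -> rsum n f <= rsum n g.
Proof. induction n; simpl; intros H. lra. assert (f n <= g n) by (apply H; lia).
  assert (rsum n f <= rsum n g) by (apply IHn; intros; apply H; lia). lra. Qed.
Lemma rsum_nonneg n f : (forall i, (i<n)%nat -> 0 <= f i) -> 0 <= rsum n f.
Proof. intros H. rewrite <- (rsum_0 n). apply rsum_le. auto. Qed.
Lemma rsum_abs_le n f g : (forall i, (i<n)%nat -> Rabs (f i) <= g i) -> Rabs (rsum n f) <= rsum n g.
Proof. intros H. eapply Rle_trans. apply rsum_abs. apply rsum_le; auto. Qed.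
Lemma rsum_abs_const n f c : (forall i, (i<n)%nat -> Rabs (f i) <= c) -> Rabs (rsum n f) <= INR n * c.
Proof. intros H. rewrite <- rsum_const. apply rsum_abs_le; auto. Qed.
Lemma rsum_delta n x c : (x < n)%nat -> rsum n (fun z => if (z =? x)%nat then c else 0) = c.
Proof.
  induction n; intros Hx. lia. simpl.
  destruct (Nat.eq_dec x n) as [->|Hne].
  - rewrite Nat.eqb_refl. rewrite (rsum_ext n _ (fun _ => 0)). rewrite rsum_0; ring.
    intros i Hi. destruct (Nat.eqb_spec i n); [lia|auto].
  - rewrite IHn by lia. destruct (Nat.eqb_spec n x); [lia|ring].
Qed.

Definition dsum L (F : nat -> nat -> R) := rsum L (fun x => rsum L (fun y => F x y)).
Definition SS L (F : nat -> nat -> R) :=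
  rsum L (fun x => rsum L (fun y => if (x =? y)%nat then 0 else F x y)).

Lemma dsum_ext L F G : (forall x y, (x<L)%nat -> (y<L)%nat -> F x y = G x y) -> dsum L F = dsum L G.
Proof. intros H. unfold dsum. apply rsum_ext; intros; apply rsum_ext; auto. Qed.
Lemma dsum_plus L F G : dsum L (fun x y => F x y + G x y) = dsum L F + dsum L G.
Proof. unfold dsum. rewrite <- rsum_plus. apply rsum_ext; intros. apply rsum_plus. Qed.
Lemma dsum_sep L c f g : dsum L (fun x y => c * f x * g y) = c * rsum L f * rsum L g.
Proof. unfold dsum. rewrite (rsum_ext L _ (fun x => (c * f x) * rsum L g)).
  rewrite rsum_scal_r, rsum_scal_l. ring. intros. rewrite <- rsum_scal_l. apply rsum_ext; intros; ring. Qed.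
Lemma dsum_abs_le L F G : (forall x y, (x<L)%nat -> (y<L)%nat -> Rabs (F x y) <= G x y) -> Rabs (dsum L F) <= dsum L G.
Proof. intros H. unfold dsum. apply rsum_abs_le. intros. apply rsum_abs_le. auto. Qed.

Lemma SS_ext L F G : (forall x y, (x<L)%nat -> (y<L)%nat -> x <> y -> F x y = G x y) -> SS L F = SS L G.
Proof. intros H. unfold SS. apply rsum_ext; intros; apply rsum_ext; intros.
  destruct (Nat.eqb_spec i i0); auto. Qed.
Lemma SS_plus L F G : SS L (fun x y => F x y + G x y) = SS L F + SS L G.
Proof. unfold SS. rewrite <- rsum_plus. apply rsum_ext; intros. rewrite <- rsum_plus.
  apply rsum_ext; intros. cbv beta; destruct (_ =? _)%nat; ring. Qed.
Lemma SS_minus L F G : SS L (fun x y => F x y - G x y) = SS L F - SS L G.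
Proof. unfold SS. rewrite <- rsum_minus. apply rsum_ext; intros. rewrite <- rsum_minus.
  apply rsum_ext; intros. cbv beta; destruct (_ =? _)%nat; ring. Qed.
Lemma SS_scal_r L F c : SS L (fun x y => F x y * c) = SS L F * c.
Proof. unfold SS. rewrite <- rsum_scal_r. apply rsum_ext; intros. rewrite <- rsum_scal_r.
  apply rsum_ext; intros. cbv beta; destruct (_ =? _)%nat; ring. Qed.
Lemma SS_0 L : SS L (fun _ _ => 0) = 0.
Proof. unfold SS. rewrite (rsum_ext L _ (fun _ => 0)); [apply rsum_0|]. intros.
  rewrite (rsum_ext L _ (fun _ => 0)); [apply rsum_0|]. intros. destruct (_ =? _)%nat; ring. Qed.
Lemma SS_rsum L n F : SS L (fun x y => rsum n (fun k => F k x y)) = rsum n (fun k => SS L (F k)).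
Proof. induction n; simpl. apply SS_0. rewrite SS_plus, IHn. reflexivity. Qed.
Lemma SS_if L (b : bool) F : SS L (fun x y => if b then F x y else 0) = if b then SS L F else 0.
Proof. destruct b. reflexivity. apply SS_0. Qed.
Lemma SS_diag0 L F : (forall x, F x x = 0) -> SS L F = dsum L F.
Proof. intros H. unfold SS, dsum. apply rsum_ext; intros; apply rsum_ext; intros.
  destruct (Nat.eqb_spec i i0); subst; auto. Qed.
Lemma SS_diag L F : SS L F = dsum L F - rsum L (fun x => F x x).
Proof. unfold SS, dsum. rewrite <- rsum_minus. apply rsum_ext; intros x Hx.
  rewrite <- (rsum_delta L x (F x x)) by auto. rewrite <- rsum_minus. apply rsum_ext; intros y Hy.
  destruct (Nat.eqb_spec x y), (Nat.eqb_spec y x); subst; try lia; ring. Qed.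
Lemma SS_abs_le L F G : (forall x y, (x<L)%nat -> (y<L)%nat -> Rabs (F x y) <= G x y) ->
  Rabs (SS L F) <= dsum L G.
Proof. intros H. unfold SS, dsum. apply rsum_abs_le. intros. apply rsum_abs_le. intros.
  destruct (_ =? _)%nat. rewrite Rabs_R0. eapply Rle_trans. apply Rabs_pos. apply H; auto. auto. Qed.

Lemma rprod_ext n f g : (forall i, (i < n)%nat -> f i = g i) -> rprod n f = rprod n g.
Proof. induction n; simpl; intros H; auto. rewrite H by lia. f_equal. apply IHn. intros; apply H; lia. Qed.
Lemma rprod_abs_le n f M : 0 <= M -> (forall j, (j<n)%nat -> Rabs (f j) <= M) -> Rabs (rprod n f) <= M ^ n.
Proof. induction n; simpl; intros HM H. rewrite Rabs_R1; lra.
  rewrite Rabs_mult. assert (Rabs (rprod n f) <= M^n) by (apply IHn; auto).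
  assert (Rabs (f n) <= M) by (apply H; lia). assert (0 <= M^n) by (apply pow_le; auto).
  assert (0 <= Rabs (rprod n f)) by apply Rabs_pos. assert (0 <= Rabs (f n)) by apply Rabs_pos. nra. Qed.

Definition S1 n (F D : nat -> R) := rsum n (fun k => D k * rprod n (fun j => if (j =? k)%nat then 1 else F j)).
Definition S2 n (F D : nat -> R) := rsum n (fun k => rsum n (fun l => if (k <? l)%nat then
   D k * D l * rprod n (fun j => if orb (j =? k)%nat (j =? l)%nat then 1 else F j) else 0)).
Definition E3 n (F D : nat -> R) := rprod n (fun j => F j + D j) - rprod n F - S1 n F D - S2 n F D.

Lemma S1_S n F D : S1 (S n) F D = S1 n F D * F n + D n * rprod n F.
Proof.
  unfold S1. cbn [rsum]. rewrite <- rsum_scal_r. f_equal.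
  - apply rsum_ext; intros k Hk. cbn [rprod]. destruct (Nat.eqb_spec n k); [lia|]. ring.
  - cbn [rprod]. rewrite Nat.eqb_refl. f_equal. rewrite Rmult_1_r. apply rprod_ext; intros j Hj.
    destruct (Nat.eqb_spec j n); [lia|auto].
Qed.

Lemma rsum_S n f : rsum (S n) f = rsum n f + f n.
Proof. reflexivity. Qed.

Lemma S2_S n F D : S2 (S n) F D = S2 n F D * F n + D n * S1 n F D.
Proof.
  unfold S2, S1. rewrite rsum_S.
  rewrite (rsum_ext (S n) (fun l => if (n <? l)%nat then _ else 0) (fun _ => 0)).
  2:{ intros l Hl. destruct (Nat.ltb_spec n l); [lia|auto]. }
  rewrite rsum_0, Rplus_0_r. rewrite <- rsum_scal_r, <- rsum_scal_l, <- rsum_plus.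
  apply rsum_ext; intros k Hk. rewrite rsum_S. rewrite <- rsum_scal_r. f_equal.
  - apply rsum_ext; intros l Hl. destruct (Nat.ltb_spec k l); [|ring]. cbn [rprod].
    destruct (Nat.eqb_spec n k); [lia|]. destruct (Nat.eqb_spec n l); [lia|]. simpl. ring.
  - destruct (Nat.ltb_spec k n); [|lia]. cbn [rprod]. rewrite Nat.eqb_refl, Bool.orb_true_r.
    rewrite Rmult_1_r. rewrite (rprod_ext n _ (fun j => if (j =? k)%nat then 1 else F j)). ring.
    intros j Hj. destruct (Nat.eqb_spec j n); [lia|]. rewrite Bool.orb_false_r. auto.
Qed.

Lemma E3_S n F D : E3 (S n) F D = E3 n F D * F n + D n * (S2 n F D + E3 n F D).
Proof. unfold E3. rewrite S1_S, S2_S. cbn [rprod]. ring. Qed.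

Lemma S1_bound n M : 0 <= M -> exists K, 0 <= K /\ forall F D d, 0 <= d ->
  (forall j, (j < n)%nat -> Rabs (F j) <= M /\ Rabs (D j) <= d) -> Rabs (S1 n F D) <= K * d.
Proof.
  intros HM. induction n.
  - exists 0. split. lra. intros. unfold S1. simpl. rewrite Rabs_R0. lra.
  - destruct IHn as [K [HK IH]]. exists (K * M + M ^ n). split.
    { assert (0 <= M^n) by (apply pow_le; auto). nra. }
    intros F D d Hd H. rewrite S1_S.
    assert (H1 : Rabs (S1 n F D) <= K * d) by (apply IH; auto; intros; apply H; lia).
    assert (H2 : Rabs (rprod n F) <= M ^ n) by (apply rprod_abs_le; auto; intros; apply H; lia).
    destruct (H n ltac:(lia)) as [H3 H4].
    eapply Rle_trans. apply Rabs_triang. rewrite !Rabs_mult.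
    assert (0 <= Rabs (S1 n F D)) by apply Rabs_pos. assert (0 <= Rabs (F n)) by apply Rabs_pos.
    assert (0 <= Rabs (D n)) by apply Rabs_pos. assert (0 <= Rabs (rprod n F)) by apply Rabs_pos.
    nra.
Qed.

Lemma S2_bound n M : 0 <= M -> exists K, 0 <= K /\ forall F D d, 0 <= d ->
  (forall j, (j < n)%nat -> Rabs (F j) <= M /\ Rabs (D j) <= d) -> Rabs (S2 n F D) <= K * d^2.
Proof.
  intros HM. induction n.
  - exists 0. split. lra. intros. unfold S2. simpl. rewrite Rabs_R0. lra.
  - destruct IHn as [K [HK IH]]. destruct (S1_bound n M HM) as [K1 [HK1 IH1]].
    exists (K * M + K1). split. nra.
    intros F D d Hd H. rewrite S2_S.
    assert (H1 : Rabs (S2 n F D) <= K * d^2) by (apply IH; auto; intros; apply H; lia).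
    assert (H2 : Rabs (S1 n F D) <= K1 * d) by (apply IH1; auto; intros; apply H; lia).
    destruct (H n ltac:(lia)) as [H3 H4].
    eapply Rle_trans. apply Rabs_triang. rewrite !Rabs_mult.
    assert (0 <= Rabs (S2 n F D)) by apply Rabs_pos. assert (0 <= Rabs (F n)) by apply Rabs_pos.
    assert (0 <= Rabs (D n)) by apply Rabs_pos. assert (0 <= Rabs (S1 n F D)) by apply Rabs_pos.
    simpl in *. nra.
Qed.

Lemma E3_bound n M : 0 <= M -> exists K, 0 <= K /\ forall F D d, 0 <= d <= 1 ->
  (forall j, (j < n)%nat -> Rabs (F j) <= M /\ Rabs (D j) <= d) -> Rabs (E3 n F D) <= K * d^3.
Proof.
  intros HM. induction n.
  - exists 0. split. lra. intros F D d _ _. replace (E3 0 F D) with 0 by (unfold E3, S1, S2; simpl; ring). rewrite Rabs_R0. lra.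
  - destruct IHn as [K [HK IH]]. destruct (S2_bound n M HM) as [K2 [HK2 IH2]].
    exists (K * M + K2 + K). split. nra.
    intros F D d Hd H. rewrite E3_S.
    assert (H1 : Rabs (E3 n F D) <= K * d^3) by (apply IH; auto; intros; apply H; lia).
    assert (H2 : Rabs (S2 n F D) <= K2 * d^2) by (apply IH2; [lra|]; intros; apply H; lia).
    destruct (H n ltac:(lia)) as [H3 H4].
    eapply Rle_trans. apply Rabs_triang. rewrite !Rabs_mult.
    assert (Rabs (S2 n F D + E3 n F D) <= K2 * d^2 + K * d^3) by (eapply Rle_trans; [apply Rabs_triang|lra]).
    assert (0 <= Rabs (E3 n F D)) by apply Rabs_pos. assert (0 <= Rabs (F n)) by apply Rabs_pos.
    assert (0 <= Rabs (D n)) by apply Rabs_pos. assert (0 <= Rabs (S2 n F D + E3 n F D)) by apply Rabs_pos.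
    assert (0 <= d^3) by (apply pow_le; lra). assert (d^4 <= d^3) by (replace (d^4) with (d^3*d) by ring; nra).
    assert (Rabs (D n) * Rabs (S2 n F D + E3 n F D) <= d * (K2 * d^2 + K * d^3)) by nra.
    assert (Rabs (E3 n F D) * Rabs (F n) <= K * d^3 * M) by nra.
    simpl in *. nra.
Qed.

Definition Dd (h : R -> R) (e a b : R) := ((a - e) * h (a - e) - a * h a) + ((b + e) * h (b + e) - b * h b).
Definition errq (th : R) (L : nat) (Nr d : R) := Rabs (d * INR L - th) + d + (1 + d * INR L) / Nr.

Lemma errq_pos th L Nr d : 1 <= Nr -> 0 <= d -> 0 <= errq th L Nr d.
Proof. intros. unfold errq. assert (0 <= INR L) by apply pos_INR.
  assert (0 <= (1 + d * INR L) / Nr) by (apply Rdiv_le_0_compat; nra). assert (0 <= Rabs (d * INR L - th)) by apply Rabs_pos. lra. Qed.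

Lemma mu_bound L (a : nat -> R) g K : (forall x, (x<L)%nat -> 0 <= a x <= 1) -> rsum L a = 1 ->
  (forall x, (x<L)%nat -> Rabs (g x) <= K) -> Rabs (rsum L (fun x => a x * g x)) <= K.
Proof. intros Ha Hs Hg. eapply Rle_trans. apply (rsum_abs_le L _ (fun x => a x * K)).
  intros. rewrite Rabs_mult, (Rabs_right (a i)) by (destruct (Ha i); auto; lra).
  apply Rmult_le_compat_l. apply Ha; auto. apply Hg; auto.
  rewrite rsum_scal_r, Hs. lra. Qed.

Lemma single_core h th : C3 h -> exists K, 0 <= K /\ forall L (Nr d : R) (a : nat -> R),
  1 <= Nr -> 0 <= d -> (forall x, (x<L)%nat -> 0 <= a x <= 1) -> rsum L a = 1 ->
  Rabs (SS L (fun x y => Nr * a x * (d + Nr * a y) * Dd h (/Nr) (a x) (a y))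
        - rsum L (fun x => a x * Aop th h (a x))) <= K * errq th L Nr d.
Proof.
  intros HC. destruct (hconst h HC) as [K [HK0 HK]]. exists (4*K). split. lra.
  intros L Nr d a HN Hd Ha Hs.
  assert (He : 0 < /Nr <= 1). { split. apply Rinv_0_lt_compat; lra. rewrite <- Rinv_1. apply Rinv_le_contravar; lra. }
  set (e := /Nr) in *.
  assert (HNe : Nr * e = 1) by (unfold e; field; lra).
  pose (B := fun x => Bop h (a x)). pose (C := fun x => Cf h (a x)).
  pose (R1 := fun x => (a x + - e) * h (a x + - e) - a x * h (a x) - (- e) * B x - (-e)^2 * C x).
  pose (R2 := fun y => (a y + e) * h (a y + e) - a y * h (a y) - e * B y - e^2 * C y).
  assert (HR1 : forall x, (x<L)%nat -> Rabs (R1 x) <= K * e^3).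
  { intros x Hx. destruct (HK (a x) (-e) (Ha x Hx) ltac:(lra)) as (_&_&_&_&H). unfold R1, B, C.
    rewrite Rabs_Ropp, (Rabs_right e) in H by lra. exact H. }
  assert (HR2 : forall x, (x<L)%nat -> Rabs (R2 x) <= K * e^3).
  { intros x Hx. destruct (HK (a x) e (Ha x Hx) ltac:(lra)) as (_&_&_&_&H). unfold R2, B, C.
    rewrite (Rabs_right e) in H by lra. exact H. }
  assert (HB : forall x, (x<L)%nat -> Rabs (B x) <= K) by (intros x Hx; apply (HK (a x) 0 (Ha x Hx) ltac:(lra))).
  assert (HC' : forall x, (x<L)%nat -> Rabs (C x) <= K) by (intros x Hx; apply (HK (a x) 0 (Ha x Hx) ltac:(lra))).
  assert (HB0 : forall x, (x<L)%nat -> Rabs (B x - h 0) <= K * a x) by (intros x Hx; apply (HK (a x) 0 (Ha x Hx) ltac:(lra))).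
  assert (E1 : SS L (fun x y => Nr * a x * (d + Nr * a y) * Dd h e (a x) (a y)) =
     SS L (fun x y => a x * (d + Nr * a y) * (B y - B x))
   + SS L (fun x y => d * e * a x * (C x + C y))
   + SS L (fun x y => a x * a y * (C x + C y))
   + SS L (fun x y => Nr * a x * (d + Nr * a y) * (R1 x + R2 y))).
  { rewrite <- !SS_plus. apply SS_ext. intros x y _ _ _. unfold Dd, R1, R2.
    replace (a x + - e) with (a x - e) by ring.
    replace e with (/Nr) by reflexivity. field. lra. }
  assert (E2 : SS L (fun x y => a x * (d + Nr * a y) * (B y - B x)) =
     d * rsum L B - d * INR L * rsum L (fun x => a x * B x)).
  { rewrite SS_diag0 by (intros; ring).
    rewrite (dsum_ext L _ (fun x y => (d * a x * B y + (-d) * (a x * B x) * 1) +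
                 (Nr * a x * (a y * B y) + (- Nr) * (a x * B x) * a y))) by (intros; ring).
    rewrite !dsum_plus, !dsum_sep. rewrite rsum_const, Hs. ring. }
  assert (E3' : SS L (fun x y => a x * a y * (C x + C y)) =
     2 * rsum L (fun x => a x * C x) - 2 * rsum L (fun x => a x * (a x * C x))).
  { rewrite SS_diag.
    rewrite (dsum_ext L _ (fun x y => 1 * (a x * C x) * a y + 1 * a x * (a y * C y))) by (intros; ring).
    rewrite !dsum_plus, !dsum_sep, Hs.
    rewrite (rsum_ext L (fun x => a x * a x * (C x + C x)) (fun x => 2 * (a x * (a x * C x)))) by (intros; ring).
    rewrite rsum_scal_l. ring. }
  assert (E4 : rsum L (fun x => a x * Aop th h (a x)) =
     2 * rsum L (fun x => a x * C x) - 2 * rsum L (fun x => a x * (a x * C x))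
     + th * h 0 - th * rsum L (fun x => a x * B x)).
  { rewrite (rsum_ext L _ (fun x => 2 * (a x * C x) - 2 * (a x * (a x * C x)) + (th * h 0) * a x - th * (a x * B x))).
    rewrite !rsum_minus, !rsum_plus, !rsum_minus, !rsum_scal_l, Hs. ring.
    intros x _. rewrite Aop_eq by auto. unfold C, B. ring. }
  rewrite E1, E2, E3', E4.
  set (muB := rsum L (fun x => a x * B x)).
  assert (HmuB : Rabs muB <= K) by (apply mu_bound; auto).
  assert (P1 : Rabs (d * rsum L B - d * INR L * muB - (th * h 0 - th * muB)) <= K * d + 2 * K * Rabs (d * INR L - th)).
  { replace (d * rsum L B - d * INR L * muB - (th * h 0 - th * muB)) with
       (d * rsum L (fun x => B x - h 0) + (d * INR L - th) * (h 0 - muB)).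
    2:{ rewrite rsum_minus, rsum_const. ring. }
    eapply Rle_trans. apply Rabs_triang. rewrite !Rabs_mult, (Rabs_right d) by lra.
    assert (Rabs (rsum L (fun x => B x - h 0)) <= K).
    { eapply Rle_trans. apply (rsum_abs_le L _ (fun x => K * a x)). auto. rewrite rsum_scal_l, Hs. lra. }
    assert (Rabs (h 0 - muB) <= 2 * K).
    { assert (Rabs (h 0) <= K) by (apply (HK 0 0); lra). eapply Rle_trans. apply Rabs_triang.
      rewrite Rabs_Ropp. lra. }
    assert (0 <= Rabs (d * INR L - th)) by apply Rabs_pos.
    assert (0 <= Rabs (rsum L (fun x => B x - h 0))) by apply Rabs_pos.
    nra. }
  assert (P2 : Rabs (SS L (fun x y => d * e * a x * (C x + C y))) <= 2 * K * d * INR L * e).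
  { eapply Rle_trans. apply (SS_abs_le L _ (fun x y => (2 * K * d * e) * a x * 1)).
    - intros x y Hx Hy. rewrite !Rabs_mult. rewrite (Rabs_right d), (Rabs_right e), (Rabs_right (a x)) by (destruct (Ha x Hx); lra).
      assert (Rabs (C x + C y) <= 2 * K) by (eapply Rle_trans; [apply Rabs_triang| pose proof (HC' x Hx); pose proof (HC' y Hy); lra]).
      destruct (Ha x Hx). assert (0 <= d * e) by nra. assert (0 <= d * e * a x) by nra. nra.
    - rewrite dsum_sep, Hs, rsum_const. lra. }
  assert (P3 : Rabs (SS L (fun x y => Nr * a x * (d + Nr * a y) * (R1 x + R2 y))) <= 2 * K * (d * INR L * e + e)).
  { eapply Rle_trans. apply (SS_abs_le L _ (fun x y => (2 * K * e^3) * (Nr * a x) * (d + Nr * a y))).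
    - intros x y Hx Hy. rewrite !Rabs_mult. destruct (Ha x Hx), (Ha y Hy).
      rewrite (Rabs_right Nr), (Rabs_right (a x)), (Rabs_right (d + Nr * a y)) by nra.
      assert (Rabs (R1 x + R2 y) <= 2 * K * e^3) by (eapply Rle_trans; [apply Rabs_triang| pose proof (HR1 x Hx); pose proof (HR2 y Hy); lra]).
      assert (0 <= Nr * a x * (d + Nr * a y)) by (apply Rmult_le_pos; [apply Rmult_le_pos|]; nra). replace (2*K*e^3*(Nr*a x)*(d+Nr*a y)) with ((Nr * a x * (d + Nr * a y)) * (2*K*e^3)) by ring. apply Rmult_le_compat_l; auto.
    - rewrite (dsum_ext L _ (fun x y => (2 * K * e^3 * Nr * d) * a x * 1 + (2 * K * e^3 * Nr * Nr) * a x * a y)) by (intros; ring).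
      rewrite dsum_plus, !dsum_sep, Hs, rsum_const.
      replace (2 * K * e ^ 3 * Nr * d * 1 * (INR L * 1) + 2 * K * e ^ 3 * Nr * Nr * 1 * 1)
        with (2 * K * (d * INR L * e * e * (Nr * e)) + 2 * K * e * ((Nr * e) * (Nr * e))) by ring.
      rewrite HNe. assert (0 <= INR L) by apply pos_INR. assert (d * INR L * e * e <= d * INR L * e).
      { assert (0 <= d * INR L * e) by (apply Rmult_le_pos; nra). nra. }
      nra. }
  unfold errq. replace ((1 + d * INR L) / Nr) with ((1 + d * INR L) * e) by reflexivity.
  match goal with |- Rabs ?X <= _ => replace X with
    ((d * rsum L B - d * INR L * muB - (th * h 0 - th * muB))
     + SS L (fun x y => d * e * a x * (C x + C y))
     + SS L (fun x y => Nr * a x * (d + Nr * a y) * (R1 x + R2 y))) by ring end.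
  eapply Rle_trans. apply Rabs_triang. eapply Rle_trans. apply Rplus_le_compat_r. apply Rabs_triang.
  assert (0 <= Rabs (d * INR L - th)) by apply Rabs_pos. assert (0 <= INR L) by apply pos_INR.
  nra.
Qed.

Lemma Dd_split h : C3 h -> exists K, 0 <= K /\ forall a b e, 0 <= a <= 1 -> 0 <= b <= 1 -> 0 < e <= 1 ->
  Rabs (Bop h a) <= K /\ Rabs (h a) <= K /\
  Rabs (Dd h e a b - e * (Bop h b - Bop h a)) <= K * e^2.
Proof.
  intros HC. destruct (hconst h HC) as [K [HK0 HK]]. exists (4*K). split. lra.
  intros a b e Ha Hb He.
  destruct (HK a (-e) Ha ltac:(lra)) as (H1&H2&H3&_&H5).
  destruct (HK b e Hb ltac:(lra)) as (_&H2'&H3'&_&H5').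
  rewrite Rabs_Ropp, (Rabs_right e) in H5 by lra. rewrite (Rabs_right e) in H5' by lra.
  split. lra. split. lra.
  replace (Dd h e a b - e * (Bop h b - Bop h a)) with
    (((a + - e) * h (a + - e) - a * h a - - e * Bop h a - (- e) ^ 2 * Cf h a)
     + ((b + e) * h (b + e) - b * h b - e * Bop h b - e ^ 2 * Cf h b) + e^2 * (Cf h a + Cf h b))
    by (unfold Dd; replace (a + - e) with (a - e) by ring; ring).
  eapply Rle_trans. apply Rabs_triang. eapply Rle_trans. apply Rplus_le_compat_r. apply Rabs_triang.
  rewrite Rabs_mult. rewrite (Rabs_right (e^2)) by (apply Rle_ge; apply pow_le; lra).
  assert (Rabs (Cf h a + Cf h b) <= 2 * K) by (eapply Rle_trans; [apply Rabs_triang|lra]).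
  assert (e^3 <= e^2) by (simpl; nra). assert (0 <= e^2) by (simpl; nra). nra.
Qed.

Lemma pair_core th h k : C3 h -> C3 k -> exists K, 0 <= K /\ forall L (Nr d : R) (a : nat -> R),
  1 <= Nr -> 0 <= d -> (forall x, (x<L)%nat -> 0 <= a x <= 1) -> rsum L a = 1 ->
  Rabs (SS L (fun x y => Nr * a x * (d + Nr * a y) * (Dd h (/Nr) (a x) (a y) * Dd k (/Nr) (a x) (a y)))
        - 2 * (rsum L (fun x => a x * (Bop h (a x) * Bop k (a x)))
               - rsum L (fun x => a x * Bop h (a x)) * rsum L (fun x => a x * Bop k (a x))))
   <= K * errq th L Nr d.
Proof.
  intros Hh Hk. destruct (Dd_split h Hh) as [K1 [HK1 H1]]. destruct (Dd_split k Hk) as [K2 [HK2 H2]].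
  set (K := K1 + K2). exists (36 * K^2). split. assert (0 <= K^2) by (simpl; nra). lra.
  intros L Nr d a HN Hd Ha Hs.
  assert (He : 0 < /Nr <= 1). { split. apply Rinv_0_lt_compat; lra. rewrite <- Rinv_1. apply Rinv_le_contravar; lra. }
  set (e := /Nr) in *.
  assert (HNe : Nr * e = 1) by (unfold e; field; lra).
  pose (Bh := fun x => Bop h (a x)). pose (Bk := fun x => Bop k (a x)).
  pose (rh := fun x y => Dd h e (a x) (a y) - e * (Bh y - Bh x)).
  pose (rk := fun x y => Dd k e (a x) (a y) - e * (Bk y - Bk x)).
  assert (Hb : forall x y, (x<L)%nat -> (y<L)%nat -> Rabs (Bh x) <= K /\ Rabs (Bk x) <= K /\
     Rabs (rh x y) <= K * e^2 /\ Rabs (rk x y) <= K * e^2).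
  { intros x y Hx Hy. destruct (H1 (a x) (a y) e (Ha x Hx) (Ha y Hy) He) as (A1&_&A3).
    destruct (H2 (a x) (a y) e (Ha x Hx) (Ha y Hy) He) as (B1&_&B3).
    assert (0 <= e^2) by (simpl; nra). unfold K, rh, rk, Bh, Bk. cbv beta. assert (0 <= K1 * e^2) by nra. assert (0 <= K2 * e^2) by nra. repeat split; nra. }
  pose (rest := fun x y => e * (Bh y - Bh x) * rk x y + rh x y * (e * (Bk y - Bk x) + rk x y)).
  assert (Hrest : forall x y, (x<L)%nat -> (y<L)%nat -> Rabs (rest x y) <= 32 * K^2 * e^3).
  { intros x y Hx Hy. destruct (Hb x y Hx Hy) as (A1&A2&A3&A4). destruct (Hb y x Hy Hx) as (B1&B2&_&_).
    unfold rest. eapply Rle_trans. apply Rabs_triang. rewrite !Rabs_mult, (Rabs_right e) by lra.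
    assert (Rabs (Bh y - Bh x) <= 2 * K) by (eapply Rle_trans; [apply Rabs_triang|rewrite Rabs_Ropp; lra]).
    assert (Rabs (e * (Bk y - Bk x) + rk x y) <= 2 * K * e + K * e^2).
    { eapply Rle_trans. apply Rabs_triang. rewrite Rabs_mult, (Rabs_right e) by lra.
      assert (Rabs (Bk y - Bk x) <= 2 * K) by (eapply Rle_trans; [apply Rabs_triang|rewrite Rabs_Ropp; lra]). nra. }
    assert (0 <= Rabs (Bh y - Bh x)) by apply Rabs_pos. assert (0 <= Rabs (rk x y)) by apply Rabs_pos.
    assert (0 <= Rabs (rh x y)) by apply Rabs_pos. assert (0 <= K) by (unfold K; lra).
    assert (e^4 <= e^3) by (simpl; nra). assert (0 <= e^2) by (simpl; nra). assert (0 <= e^3) by (simpl; nra).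
    assert (T1 : e * Rabs (Bh y - Bh x) * Rabs (rk x y) <= e * (2 * K) * (K * e^2)).
    { apply Rmult_le_compat; try nra. }
    assert (T2 : Rabs (rh x y) * Rabs (e * (Bk y - Bk x) + rk x y) <= (K * e^2) * (2 * K * e + K * e^2)).
    { apply Rmult_le_compat; try apply Rabs_pos; nra. }
    assert (K^2 * e^4 <= K^2 * e^3) by (apply Rmult_le_compat_l; simpl; nra).
    simpl in *. nra. }
  assert (E1 : SS L (fun x y => Nr * a x * (d + Nr * a y) * (Dd h e (a x) (a y) * Dd k e (a x) (a y))) =
     SS L (fun x y => a x * a y * ((Bh y - Bh x) * (Bk y - Bk x)))
   + SS L (fun x y => d * e * a x * ((Bh y - Bh x) * (Bk y - Bk x)))
   + SS L (fun x y => Nr * a x * (d + Nr * a y) * rest x y)).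
  { rewrite <- !SS_plus. apply SS_ext. intros x y _ _ _. unfold rest, rh, rk.
    replace e with (/Nr) by reflexivity. field. lra. }
  assert (E2 : SS L (fun x y => a x * a y * ((Bh y - Bh x) * (Bk y - Bk x))) =
     2 * (rsum L (fun x => a x * (Bh x * Bk x)) - rsum L (fun x => a x * Bh x) * rsum L (fun x => a x * Bk x))).
  { rewrite SS_diag0 by (intros; ring).
    rewrite (dsum_ext L _ (fun x y => (1 * a x * (a y * (Bh y * Bk y)) + (-1) * (a x * Bk x) * (a y * Bh y))
         + ((-1) * (a x * Bh x) * (a y * Bk y) + 1 * (a x * (Bh x * Bk x)) * a y))) by (intros; ring).
    rewrite !dsum_plus, !dsum_sep, Hs. ring. }
  rewrite E1, E2. fold Bh Bk.
  match goal with |- Rabs ?X <= _ => replace X with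
    (SS L (fun x y => d * e * a x * ((Bh y - Bh x) * (Bk y - Bk x)))
     + SS L (fun x y => Nr * a x * (d + Nr * a y) * rest x y)) by (unfold Bh, Bk; ring) end.
  assert (P2 : Rabs (SS L (fun x y => d * e * a x * ((Bh y - Bh x) * (Bk y - Bk x)))) <= 4 * K^2 * d * INR L * e).
  { eapply Rle_trans. apply (SS_abs_le L _ (fun x y => (4 * K^2 * d * e) * a x * 1)).
    - intros x y Hx Hy. rewrite !Rabs_mult. rewrite (Rabs_right d), (Rabs_right e), (Rabs_right (a x)) by (destruct (Ha x Hx); lra).
      destruct (Hb x y Hx Hy) as (A1&A2&_&_). destruct (Hb y x Hy Hx) as (B1&B2&_&_).
      assert (Rabs (Bh y - Bh x) <= 2 * K) by (eapply Rle_trans; [apply Rabs_triang|rewrite Rabs_Ropp; lra]).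
      assert (Rabs (Bk y - Bk x) <= 2 * K) by (eapply Rle_trans; [apply Rabs_triang|rewrite Rabs_Ropp; lra]).
      assert (Rabs (Bh y - Bh x) * Rabs (Bk y - Bk x) <= 4 * K^2).
      { simpl. replace (4 * (K * (K * 1))) with ((2*K)*(2*K)) by ring. apply Rmult_le_compat; try apply Rabs_pos; lra. }
      destruct (Ha x Hx). assert (0 <= d * e * a x) by (apply Rmult_le_pos; nra).
      replace (4 * K ^ 2 * d * e * a x * 1) with ((d * e * a x) * (4 * K^2)) by ring.
      match goal with |- ?L <= _ => replace L with ((d * e * a x) * (Rabs (Bh y - Bh x) * Rabs (Bk y - Bk x))) by ring end. apply Rmult_le_compat_l; auto.
    - rewrite dsum_sep, Hs, rsum_const. lra. }
  assert (P3 : Rabs (SS L (fun x y => Nr * a x * (d + Nr * a y) * rest x y)) <= 32 * K^2 * (d * INR L * e + e)).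
  { eapply Rle_trans. apply (SS_abs_le L _ (fun x y => (32 * K^2 * e^3) * (Nr * a x) * (d + Nr * a y))).
    - intros x y Hx Hy. rewrite Rabs_mult. destruct (Ha x Hx), (Ha y Hy).
      assert (0 <= Nr * a x * (d + Nr * a y)) by (apply Rmult_le_pos; [apply Rmult_le_pos|]; nra).
      rewrite (Rabs_right (Nr * a x * (d + Nr * a y))) by lra.
      replace (32*K^2*e^3*(Nr*a x)*(d+Nr*a y)) with ((Nr * a x * (d + Nr * a y)) * (32*K^2*e^3)) by ring.
      apply Rmult_le_compat_l; auto.
    - rewrite (dsum_ext L _ (fun x y => (32 * K^2 * e^3 * Nr * d) * a x * 1 + (32 * K^2 * e^3 * Nr * Nr) * a x * a y)) by (intros; ring).
      rewrite dsum_plus, !dsum_sep, Hs, rsum_const.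
      replace (32 * K^2 * e ^ 3 * Nr * d * 1 * (INR L * 1) + 32 * K^2 * e ^ 3 * Nr * Nr * 1 * 1)
        with (32 * K^2 * (d * INR L * e * e * (Nr * e)) + 32 * K^2 * e * ((Nr * e) * (Nr * e))) by ring.
      rewrite HNe. assert (0 <= INR L) by apply pos_INR. assert (d * INR L * e * e <= d * INR L * e).
      { assert (0 <= d * INR L * e) by (apply Rmult_le_pos; [apply Rmult_le_pos|]; lra). nra. }
      assert (0 <= K^2) by (simpl; nra). nra. }
  unfold errq. replace ((1 + d * INR L) / Nr) with ((1 + d * INR L) * e) by reflexivity.
  eapply Rle_trans. apply Rabs_triang.
  assert (0 <= Rabs (d * INR L - th)) by apply Rabs_pos. assert (0 <= INR L) by apply pos_INR.
  assert (0 <= K^2) by (simpl; nra). assert (0 <= d * INR L * e) by (apply Rmult_le_pos; [apply Rmult_le_pos|]; lra).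
  assert (0 <= K^2 * d) by (apply Rmult_le_pos; lra).
  nra.
Qed.

Definition av (N : nat) (eta : nat -> nat) (x : nat) := INR (eta x) / INR N.

Lemma nsum_INR L eta : INR (nsum L eta) = rsum L (fun x => INR (eta x)).
Proof. induction L; simpl; auto. rewrite plus_INR, IHL. reflexivity. Qed.
Lemma nsum_ge L eta x : (x < L)%nat -> (eta x <= nsum L eta)%nat.
Proof. induction L; intros; simpl. lia. destruct (Nat.eq_dec x L). subst; lia.
  specialize (IHL ltac:(lia)). lia. Qed.

Lemma av_sum L N eta : 0 < INR N -> nsum L eta = N -> rsum L (av N eta) = 1.
Proof. intros HN Hs. unfold av, Rdiv. rewrite rsum_scal_r, <- nsum_INR, Hs. field. lra. Qed.
Lemma av_range L N eta x : 0 < INR N -> nsum L eta = N -> (x < L)%nat -> 0 <= av N eta x <= 1.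
Proof. intros HN Hs Hx. unfold av. split. apply Rdiv_le_0_compat; [apply pos_INR|lra].
  apply (Rmult_le_reg_r (INR N)); auto. unfold Rdiv. rewrite Rmult_assoc, Rinv_l, Rmult_1_r, Rmult_1_l by lra.
  apply le_INR. rewrite <- Hs. apply nsum_ge; auto. Qed.

Lemma mu_jump L N eta x y g : (x<L)%nat -> (y<L)%nat -> x <> y -> (1 <= eta x)%nat -> 0 < INR N ->
  mu_eta L N (jump eta x y) g = mu_eta L N eta g
    + ((av N eta x - /INR N) * g (av N eta x - /INR N) - av N eta x * g (av N eta x))
    + ((av N eta y + /INR N) * g (av N eta y + /INR N) - av N eta y * g (av N eta y)).
Proof.
  intros Hx Hy Hxy H1 HN.
  set (c1 := ((av N eta x - /INR N) * g (av N eta x - /INR N) - av N eta x * g (av N eta x))).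
  set (c2 := ((av N eta y + /INR N) * g (av N eta y + /INR N) - av N eta y * g (av N eta y))).
  rewrite <- (rsum_delta L x c1) by auto. rewrite <- (rsum_delta L y c2) by auto.
  unfold mu_eta. rewrite <- !rsum_plus. apply rsum_ext. intros z Hz. unfold jump.
  destruct (Nat.eqb_spec z x); destruct (Nat.eqb_spec z y); subst; try lia.
  - unfold c1, av. rewrite minus_INR by auto. simpl INR.
    replace ((INR (eta x) - 1) / INR N) with (INR (eta x) / INR N - / INR N) by (field; lra). ring.
  - unfold c2, av. rewrite plus_INR. simpl INR.
    replace ((INR (eta y) + 1) / INR N) with (INR (eta y) / INR N + / INR N) by (field; lra). ring.
  - ring.
Qed.

Lemma rprod_shift n f : rprod (S n) f = f 0%nat * rprod n (fun j => f (S j)).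
Proof. induction n. simpl. ring. change (rprod (S (S n)) f) with (rprod (S n) f * f (S n)).
  rewrite IHn. simpl. ring. Qed.

Lemma mon_rprod ev hs : mon_eval ev hs = rprod (length hs) (fun j => ev (nth j hs hzero)).
Proof. unfold mon_eval. induction hs. reflexivity. cbn [fold_right length]. rewrite rprod_shift. cbn [nth]. rewrite IHhs. reflexivity. Qed.

Lemma gen_expand L N d eta hs : 0 < INR N ->
  gen L d (fun xi => mon_eval (mu_eta L N xi) hs) eta =
  SS L (fun x y => INR (N) * av N eta x * (d + INR N * av N eta y) *
     (rprod (length hs) (fun j => mu_eta L N eta (nth j hs hzero) +
            Dd (nth j hs hzero) (/INR N) (av N eta x) (av N eta y))
      - rprod (length hs) (fun j => mu_eta L N eta (nth j hs hzero)))).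
Proof.
  intros HN. unfold gen. fold (SS L (fun x y => INR (eta x) * (d + INR (eta y)) *
    (mon_eval (mu_eta L N (jump eta x y)) hs - mon_eval (mu_eta L N eta) hs))).
  apply SS_ext. intros x y Hx Hy Hxy. rewrite !mon_rprod.
  replace (INR N * av N eta x) with (INR (eta x)) by (unfold av; field; lra).
  replace (INR N * av N eta y) with (INR (eta y)) by (unfold av; field; lra).
  destruct (eta x) eqn:Ex.
  - simpl. ring.
  - f_equal. f_equal. apply rprod_ext. intros j _. rewrite mu_jump by (auto; lia).
    unfold Dd. ring.
Qed.

Lemma finite_max (Q : nat -> R -> Prop) n :
  (forall k K K', Q k K -> K <= K' -> Q k K') ->
  (forall k, (k < n)%nat -> exists K, Q k K) -> exists K, 0 <= K /\ forall k, (k < n)%nat -> Q k K.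
Proof.
  intros Hm. induction n; intros H.
  - exists 0. split. lra. intros; lia.
  - destruct IHn as [K [HK0 HK]]. intros; apply H; lia.
    destruct (H n ltac:(lia)) as [Kn HKn].
    exists (K + Rabs Kn). split. pose proof (Rabs_pos Kn). lra.
    intros k Hk. destruct (Nat.eq_dec k n). subst. apply (Hm _ Kn); auto. pose proof (Rle_abs Kn); lra.
    apply (Hm _ K). apply HK; lia. pose proof (Rabs_pos Kn); lra.
Qed.

Definition hjs (hs : list (R -> R)) (j : nat) := nth j hs hzero.

Lemma Lmon_eq th ev hs : Lmon th ev hs =
  2 * rsum (length hs) (fun k => rsum (length hs) (fun l =>
        if (k <? l)%nat then
          (ev (fun z => Bop (hjs hs k) z * Bop (hjs hs l) z) - ev (Bop (hjs hs k)) * ev (Bop (hjs hs l)))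
          * rprod (length hs) (fun j => if orb (j =? k)%nat (j =? l)%nat then 1 else ev (hjs hs j))
        else 0))
  + rsum (length hs) (fun k => ev (Aop th (hjs hs k))
        * rprod (length hs) (fun j => if (j =? k)%nat then 1 else ev (hjs hs j))).
Proof. reflexivity. Qed.

Lemma SS_S1 L n (r : nat -> nat -> R) F (D : nat -> nat -> nat -> R) :
  SS L (fun x y => r x y * S1 n F (fun j => D j x y)) =
  rsum n (fun k => SS L (fun x y => r x y * D k x y) * rprod n (fun j => if (j =? k)%nat then 1 else F j)).
Proof.
  unfold S1. transitivity (SS L (fun x y => rsum n (fun k => r x y * D k x y * rprod n (fun j => if (j =? k)%nat then 1 else F j)))).
  - apply SS_ext; intros. rewrite <- rsum_scal_l. apply rsum_ext; intros; ring.
  - rewrite SS_rsum. apply rsum_ext; intros. exact (SS_scal_r _ _ _).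
Qed.

Lemma SS_S2 L n (r : nat -> nat -> R) F (D : nat -> nat -> nat -> R) :
  SS L (fun x y => r x y * S2 n F (fun j => D j x y)) =
  rsum n (fun k => rsum n (fun l => if (k <? l)%nat then
     SS L (fun x y => r x y * (D k x y * D l x y)) * rprod n (fun j => if orb (j =? k)%nat (j =? l)%nat then 1 else F j)
     else 0)).
Proof.
  unfold S2. transitivity (SS L (fun x y => rsum n (fun k => rsum n (fun l => if (k <? l)%nat then
     r x y * (D k x y * D l x y) * rprod n (fun j => if orb (j =? k)%nat (j =? l)%nat then 1 else F j) else 0)))).
  - apply SS_ext; intros. rewrite <- rsum_scal_l. apply rsum_ext; intros.
    rewrite <- rsum_scal_l. apply rsum_ext; intros. destruct (_ <? _)%nat; ring.
  - rewrite SS_rsum. apply rsum_ext; intros. rewrite SS_rsum. apply rsum_ext; intros.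
    destruct (_ <? _)%nat. exact (SS_scal_r _ _ _). apply SS_0.
Qed.

Lemma prod_decomp n F D : rprod n (fun j => F j + D j) - rprod n F = S1 n F D + S2 n F D + E3 n F D.
Proof. unfold E3. ring. Qed.

Lemma combine n (A1 B1 P1 : nat -> R) (A2 B2 P2 : nat -> nat -> R) X :
  rsum n (fun k => A1 k * P1 k) + rsum n (fun k => rsum n (fun l => if (k <? l)%nat then A2 k l * P2 k l else 0)) + X
  - (2 * rsum n (fun k => rsum n (fun l => if (k <? l)%nat then B2 k l * P2 k l else 0)) + rsum n (fun k => B1 k * P1 k))
  = rsum n (fun k => (A1 k - B1 k) * P1 k) + rsum n (fun k => rsum n (fun l => if (k <? l)%nat then (A2 k l - 2 * B2 k l) * P2 k l else 0)) + X.
Proof.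
  rewrite <- rsum_scal_l. rewrite (rsum_ext n (fun k => (A1 k - B1 k) * P1 k) (fun k => A1 k * P1 k - B1 k * P1 k)) by (intros; ring).
  rewrite rsum_minus.
  rewrite (rsum_ext n (fun k => rsum n (fun l => if (k <? l)%nat then (A2 k l - 2 * B2 k l) * P2 k l else 0))
    (fun k => rsum n (fun l => if (k <? l)%nat then A2 k l * P2 k l else 0) - 2 * rsum n (fun l => if (k <? l)%nat then B2 k l * P2 k l else 0))).
  rewrite rsum_minus. ring.
  intros k _. rewrite <- rsum_scal_l, <- rsum_minus. apply rsum_ext; intros. destruct (k <? i)%nat; ring.
Qed.

Lemma mon_main th hs : List.Forall C3 hs -> exists K K1, 0 <= K /\ forall L N d eta,
  1 <= INR N -> K1 <= INR N -> 0 <= d -> nsum L eta = N ->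
  Rabs (gen L d (fun xi => mon_eval (mu_eta L N xi) hs) eta - Lmon th (mu_eta L N eta) hs)
    <= K * errq th L (INR N) d.
Proof.
  intros HF. set (n := length hs).
  assert (HC : forall j, (j < n)%nat -> C3 (hjs hs j)). { intros j Hj. unfold hjs. apply (proj1 (List.Forall_nth C3 hs) HF); auto. }
  destruct (finite_max (fun j K => forall a b e, 0 <= a <= 1 -> 0 <= b <= 1 -> 0 < e <= 1 ->
     Rabs (Bop (hjs hs j) a) <= K /\ Rabs (hjs hs j a) <= K /\
     Rabs (Dd (hjs hs j) e a b - e * (Bop (hjs hs j) b - Bop (hjs hs j) a)) <= K * e^2) n) as [KD [HKD0 HKD]].
  { intros k K K' H HK a b e Ha Hb He. destruct (H a b e Ha Hb He) as (?&?&?).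
    assert (0 <= e^2) by (simpl; nra). repeat split; nra. }
  { intros k Hk. destruct (Dd_split _ (HC k Hk)) as [K [_ HK]]. exists K; auto. }
  destruct (finite_max (fun j K => forall L (Nr d : R) (a : nat -> R),
    1 <= Nr -> 0 <= d -> (forall x, (x<L)%nat -> 0 <= a x <= 1) -> rsum L a = 1 ->
    Rabs (SS L (fun x y => Nr * a x * (d + Nr * a y) * Dd (hjs hs j) (/Nr) (a x) (a y))
        - rsum L (fun x => a x * Aop th (hjs hs j) (a x))) <= K * errq th L Nr d) n) as [Ks [HKs0 HKs]].
  { intros k K K' H HK L Nr d a H1 H2 H3 H4. eapply Rle_trans. apply H; auto.
    apply Rmult_le_compat_r; auto. apply errq_pos; auto. }
  { intros k Hk. destruct (single_core _ th (HC k Hk)) as [K [_ HK]]. exists K; auto. }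
  destruct (finite_max (fun j K => forall l, (l < n)%nat -> forall L (Nr d : R) (a : nat -> R),
    1 <= Nr -> 0 <= d -> (forall x, (x<L)%nat -> 0 <= a x <= 1) -> rsum L a = 1 ->
    Rabs (SS L (fun x y => Nr * a x * (d + Nr * a y) * (Dd (hjs hs j) (/Nr) (a x) (a y) * Dd (hjs hs l) (/Nr) (a x) (a y)))
        - 2 * (rsum L (fun x => a x * (Bop (hjs hs j) (a x) * Bop (hjs hs l) (a x)))
               - rsum L (fun x => a x * Bop (hjs hs j) (a x)) * rsum L (fun x => a x * Bop (hjs hs l) (a x))))
   <= K * errq th L Nr d) n) as [Kp [HKp0 HKp]].
  { intros k K K' H HK l Hl L Nr d a H1 H2 H3 H4. eapply Rle_trans. apply H; auto.
    apply Rmult_le_compat_r; auto. apply errq_pos; auto. }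
  { intros k Hk. destruct (finite_max (fun l K => forall L (Nr d : R) (a : nat -> R),
    1 <= Nr -> 0 <= d -> (forall x, (x<L)%nat -> 0 <= a x <= 1) -> rsum L a = 1 ->
    Rabs (SS L (fun x y => Nr * a x * (d + Nr * a y) * (Dd (hjs hs k) (/Nr) (a x) (a y) * Dd (hjs hs l) (/Nr) (a x) (a y)))
        - 2 * (rsum L (fun x => a x * (Bop (hjs hs k) (a x) * Bop (hjs hs l) (a x)))
               - rsum L (fun x => a x * Bop (hjs hs k) (a x)) * rsum L (fun x => a x * Bop (hjs hs l) (a x))))
     <= K * errq th L Nr d) n) as [K [_ HK]].
    - intros l K K' H HK L Nr d a H1 H2 H3 H4. eapply Rle_trans. apply H; auto.
      apply Rmult_le_compat_r; auto. apply errq_pos; auto.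
    - intros l Hl. destruct (pair_core th _ _ (HC k Hk) (HC l Hl)) as [K [_ HK]]. exists K; auto.
    - exists K; auto. }
  set (M := KD + 1).
  destruct (E3_bound n M ltac:(unfold M; lra)) as [KE [HKE0 HKE]].
  assert (HMn : 0 <= M ^ n) by (apply pow_le; unfold M; lra).
  assert (Hn : 0 <= INR n) by apply pos_INR.
  exists (INR n * Ks * M^n + INR n * INR n * Kp * M^n + KE * 27 * KD^3), (3 * KD).
  split.
  { assert (0 <= INR n * Ks * M^n) by (apply Rmult_le_pos; [apply Rmult_le_pos|]; auto).
    assert (0 <= INR n * INR n * Kp * M^n) by (apply Rmult_le_pos; [apply Rmult_le_pos; [apply Rmult_le_pos|]|]; auto).
    assert (0 <= KE * 27 * KD^3) by (apply Rmult_le_pos; [lra|apply pow_le; lra]). lra. }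
  intros L N d eta HN1 HNK Hd Hs.
  assert (HN0 : 0 < INR N) by lra.
  rewrite gen_expand by auto. rewrite Lmon_eq. fold n.
  set (Nr := INR N) in *.
  set (a := av N eta).
  assert (Ha : forall x, (x<L)%nat -> 0 <= a x <= 1) by (intros; apply (av_range L); auto).
  assert (Hsa : rsum L a = 1) by (apply av_sum; auto).
  assert (He : 0 < /Nr <= 1). { split. apply Rinv_0_lt_compat; lra. rewrite <- Rinv_1. apply Rinv_le_contravar; lra. }
  set (e := /Nr) in *.
  assert (HNe : Nr * e = 1) by (unfold e; field; lra).
  set (Fv := fun j => mu_eta L N eta (hjs hs j)).
  assert (HFv : forall j, (j < n)%nat -> Rabs (Fv j) <= M).
  { intros j Hj. change (Fv j) with (rsum L (fun x => a x * hjs hs j (a x))).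
    assert (Rabs (rsum L (fun x => a x * hjs hs j (a x))) <= KD).
    { apply mu_bound; auto. intros x Hx. destruct (HKD j Hj (a x) (a x) 1 (Ha x Hx) (Ha x Hx) ltac:(lra)) as (_&?&_). auto. }
    unfold M; lra. }
  set (D := fun j x y => Dd (hjs hs j) e (a x) (a y)).
  set (dl := 3 * KD * e).
  assert (Hdl : 0 <= dl <= 1).
  { unfold dl. split. apply Rmult_le_pos; lra. unfold e. apply (Rmult_le_reg_r Nr). lra.
    rewrite Rmult_assoc, Rinv_l by lra. lra. }
  assert (HD : forall j x y, (j < n)%nat -> (x < L)%nat -> (y < L)%nat -> Rabs (D j x y) <= dl).
  { intros j x y Hj Hx Hy. destruct (HKD j Hj (a x) (a y) e (Ha x Hx) (Ha y Hy) He) as (_&_&H3).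
    destruct (HKD j Hj (a x) (a y) e (Ha x Hx) (Ha y Hy) He) as (H1&_&_).
    destruct (HKD j Hj (a y) (a x) e (Ha y Hy) (Ha x Hx) He) as (H1'&_&_).
    unfold D, dl.
    replace (Dd (hjs hs j) e (a x) (a y)) with ((Dd (hjs hs j) e (a x) (a y) - e * (Bop (hjs hs j) (a y) - Bop (hjs hs j) (a x))) + e * (Bop (hjs hs j) (a y) - Bop (hjs hs j) (a x))) by ring.
    eapply Rle_trans. apply Rabs_triang. rewrite Rabs_mult, (Rabs_right e) by lra.
    assert (Rabs (Bop (hjs hs j) (a y) - Bop (hjs hs j) (a x)) <= 2 * KD) by (eapply Rle_trans; [apply Rabs_triang|rewrite Rabs_Ropp; lra]).
    assert (e^2 <= e) by (simpl; nra). nra. }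
  rewrite (SS_ext L _ (fun x y => Nr * a x * (d + Nr * a y) * S1 n Fv (fun j => D j x y)
      + Nr * a x * (d + Nr * a y) * S2 n Fv (fun j => D j x y)
      + Nr * a x * (d + Nr * a y) * E3 n Fv (fun j => D j x y))).
  2:{ intros x y _ _ _. rewrite <- !Rmult_plus_distr_l. f_equal.
      exact (prod_decomp n Fv (fun j => D j x y)). }
  rewrite !SS_plus.
  rewrite (SS_S1 L n (fun x y => Nr * a x * (d + Nr * a y)) Fv D).
  rewrite (SS_S2 L n (fun x y => Nr * a x * (d + Nr * a y)) Fv D).
  assert (HX : Rabs (SS L (fun x y => Nr * a x * (d + Nr * a y) * E3 n Fv (fun j => D j x y)))
     <= KE * 27 * KD^3 * errq th L Nr d).
  { eapply Rle_trans. apply (SS_abs_le L _ (fun x y => (KE * dl^3) * (Nr * a x) * (d + Nr * a y))).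
    - intros x y Hx Hy. rewrite Rabs_mult. destruct (Ha x Hx), (Ha y Hy).
      assert (0 <= Nr * a x * (d + Nr * a y)) by (apply Rmult_le_pos; [apply Rmult_le_pos|]; nra).
      rewrite (Rabs_right (Nr * a x * (d + Nr * a y))) by lra.
      replace (KE*dl^3*(Nr*a x)*(d+Nr*a y)) with ((Nr * a x * (d + Nr * a y)) * (KE*dl^3)) by ring.
      apply Rmult_le_compat_l. auto. apply HKE; auto.
    - rewrite (dsum_ext L _ (fun x y => (KE * dl^3 * Nr * d) * a x * 1 + (KE * dl^3 * Nr * Nr) * a x * a y)) by (intros; ring).
      rewrite dsum_plus, !dsum_sep, Hsa, rsum_const.
      unfold dl. unfold errq. replace ((1 + d * INR L) / Nr) with ((1 + d * INR L) * e) by reflexivity.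
      replace (KE * (3 * KD * e) ^ 3 * Nr * d * 1 * (INR L * 1) + KE * (3 * KD * e) ^ 3 * Nr * Nr * 1 * 1)
        with (KE * 27 * KD^3 * (d * INR L * e * e * (Nr * e) + e * ((Nr * e) * (Nr * e)))) by ring.
      rewrite HNe. assert (0 <= INR L) by apply pos_INR.
      assert (0 <= KE * 27 * KD^3) by (apply Rmult_le_pos; [lra|apply pow_le; lra]).
      apply Rmult_le_compat_l; auto.
      assert (d * INR L * e * e <= d * INR L * e).
      { assert (0 <= d * INR L * e) by (apply Rmult_le_pos; [apply Rmult_le_pos|]; lra). nra. }
      assert (0 <= Rabs (d * INR L - th)) by apply Rabs_pos. nra. }
  unfold Fv, D, hjs in *. cbv beta.
  rewrite combine.
  assert (Herr : 0 <= errq th L Nr d) by (apply errq_pos; auto).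
  assert (HP1 : forall k, (k < n)%nat -> Rabs (rprod n (fun j => if (j =? k)%nat then 1 else mu_eta L N eta (nth j hs hzero))) <= M^n).
  { intros k Hk. apply rprod_abs_le. unfold M; lra. intros j Hj. destruct (j =? k)%nat.
    rewrite Rabs_R1. unfold M; lra. apply HFv; auto. }
  assert (HP2 : forall k l, (k < n)%nat -> Rabs (rprod n (fun j => if orb (j =? k)%nat (j =? l)%nat then 1 else mu_eta L N eta (nth j hs hzero))) <= M^n).
  { intros k l Hk. apply rprod_abs_le. unfold M; lra. intros j Hj. destruct (orb _ _).
    rewrite Rabs_R1. unfold M; lra. apply HFv; auto. }
  assert (HT1 : Rabs (rsum n (fun k => (SS L (fun x y => Nr * a x * (d + Nr * a y) * Dd (nth k hs hzero) e (a x) (a y))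
        - mu_eta L N eta (Aop th (nth k hs hzero))) *
        rprod n (fun j => if (j =? k)%nat then 1 else mu_eta L N eta (nth j hs hzero))))
      <= INR n * (Ks * errq th L Nr d * M^n)).
  { apply rsum_abs_const. intros k Hk. rewrite Rabs_mult. apply Rmult_le_compat; try apply Rabs_pos.
    exact (HKs k Hk L Nr d a HN1 Hd Ha Hsa). auto. }
  assert (HT2 : Rabs (rsum n (fun k => rsum n (fun l => if (k <? l)%nat then
        (SS L (fun x y => Nr * a x * (d + Nr * a y) * (Dd (nth k hs hzero) e (a x) (a y) * Dd (nth l hs hzero) e (a x) (a y)))
         - 2 * (mu_eta L N eta (fun z => Bop (nth k hs hzero) z * Bop (nth l hs hzero) z)
                - mu_eta L N eta (Bop (nth k hs hzero)) * mu_eta L N eta (Bop (nth l hs hzero)))) *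
        rprod n (fun j => if orb (j =? k)%nat (j =? l)%nat then 1 else mu_eta L N eta (nth j hs hzero))
        else 0)))
      <= INR n * (INR n * (Kp * errq th L Nr d * M^n))).
  { apply rsum_abs_const. intros k Hk. apply rsum_abs_const. intros l Hl.
    assert (0 <= Kp * errq th L Nr d) by (apply Rmult_le_pos; auto).
    destruct (k <? l)%nat.
    - rewrite Rabs_mult. apply Rmult_le_compat; try apply Rabs_pos.
      exact (HKp k Hk l Hl L Nr d a HN1 Hd Ha Hsa). auto.
    - rewrite Rabs_R0. apply Rmult_le_pos; auto. }
  eapply Rle_trans. apply Rabs_triang. eapply Rle_trans. apply Rplus_le_compat_r. apply Rabs_triang.
  replace ((INR n * Ks * M ^ n + INR n * INR n * Kp * M ^ n + KE * 27 * KD ^ 3) * errq th L Nr d)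
    with (INR n * (Ks * errq th L Nr d * M^n) + INR n * (INR n * (Kp * errq th L Nr d * M^n)) + KE * 27 * KD ^ 3 * errq th L Nr d) by ring.
  apply Rplus_le_compat. apply Rplus_le_compat. exact HT1. exact HT2. exact HX.
Qed.

Lemma gen_lin L d (c : R) f g eta :
  gen L d (fun xi => c * f xi + g xi) eta = c * gen L d f eta + gen L d g eta.
Proof.
  unfold gen. fold (SS L (fun x y => INR (eta x) * (d + INR (eta y)) * (c * f (jump eta x y) + g (jump eta x y) - (c * f eta + g eta)))).
  fold (SS L (fun x y => INR (eta x) * (d + INR (eta y)) * (f (jump eta x y) - f eta))).
  fold (SS L (fun x y => INR (eta x) * (d + INR (eta y)) * (g (jump eta x y) - g eta))).
  rewrite (SS_ext L _ (fun x y => INR (eta x) * (d + INR (eta y)) * (f (jump eta x y) - f eta) * c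
     + INR (eta x) * (d + INR (eta y)) * (g (jump eta x y) - g eta))) by (intros; ring).
  rewrite SS_plus, SS_scal_r. ring.
Qed.

Lemma gen_0 L d eta : gen L d (fun _ => 0) eta = 0.
Proof.
  unfold gen. fold (SS L (fun x y => INR (eta x) * (d + INR (eta y)) * (0 - 0))).
  rewrite (SS_ext L _ (fun _ _ => 0)) by (intros; ring). apply SS_0.
Qed.

Lemma poly_main th P : List.Forall (fun m => List.Forall C3 (snd m)) P -> exists K K1, 0 <= K /\ forall L N d eta,
  1 <= INR N -> K1 <= INR N -> 0 <= d -> nsum L eta = N ->
  Rabs (gen L d (fun xi => H_eval (mu_eta L N xi) P) eta - LH th (mu_eta L N eta) P)
    <= K * errq th L (INR N) d.
Proof.
  induction P as [|m P IH]; intros HF.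
  - exists 0, 0. split. lra. intros. unfold H_eval, LH. simpl. rewrite gen_0.
    replace (0 - 0) with 0 by ring. rewrite Rabs_R0. lra.
  - inversion HF as [|? ? Hm HP]; subst.
    destruct (IH HP) as [K [K1 [HK0 HK]]]. destruct (mon_main th (snd m) Hm) as [Km [Km1 [HKm0 HKm]]].
    exists (Rabs (fst m) * Km + K), (Rmax K1 Km1). split.
    { pose proof (Rabs_pos (fst m)). nra. }
    intros L N d eta HN1 HNK Hd Hs.
    assert (Herr : 0 <= errq th L (INR N) d) by (apply errq_pos; auto).
    change (Rabs (gen L d (fun xi => fst m * mon_eval (mu_eta L N xi) (snd m) + H_eval (mu_eta L N xi) P) eta -
       (fst m * Lmon th (mu_eta L N eta) (snd m) + LH th (mu_eta L N eta) P))
       <= (Rabs (fst m) * Km + K) * errq th L (INR N) d).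
    rewrite gen_lin.
    replace (fst m * gen L d (fun xi => mon_eval (mu_eta L N xi) (snd m)) eta +
       gen L d (fun xi => H_eval (mu_eta L N xi) P) eta -
       (fst m * Lmon th (mu_eta L N eta) (snd m) + LH th (mu_eta L N eta) P))
      with (fst m * (gen L d (fun xi => mon_eval (mu_eta L N xi) (snd m)) eta - Lmon th (mu_eta L N eta) (snd m))
         + (gen L d (fun xi => H_eval (mu_eta L N xi) P) eta - LH th (mu_eta L N eta) P)) by ring.
    eapply Rle_trans. apply Rabs_triang. rewrite Rabs_mult.
    assert (H1 : Rabs (gen L d (fun xi => mon_eval (mu_eta L N xi) (snd m)) eta - Lmon th (mu_eta L N eta) (snd m)) <= Km * errq th L (INR N) d).
    { apply HKm; [exact HN1| eapply Rle_trans; [apply Rmax_r|exact HNK] | exact Hd | exact Hs]. }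
    assert (H2 : Rabs (gen L d (fun xi => H_eval (mu_eta L N xi) P) eta - LH th (mu_eta L N eta) P) <= K * errq th L (INR N) d).
    { apply HK; [exact HN1| eapply Rle_trans; [apply Rmax_l|exact HNK] | exact Hd | exact Hs]. }
    assert (Rabs (fst m) * Rabs (gen L d (fun xi => mon_eval (mu_eta L N xi) (snd m)) eta - Lmon th (mu_eta L N eta) (snd m))
       <= Rabs (fst m) * (Km * errq th L (INR N) d)) by (apply Rmult_le_compat_l; auto; apply Rabs_pos).
    nra.
Qed.

Lemma nat_above (x : R) : exists k : nat, x <= INR k.
Proof. destruct (INR_archimed 1 x) as [k Hk]. lra. exists k. lra. Qed.

Theorem proposition2p1 :
  forall (rho theta : R) (d : nat -> R) (P : dpoly),
    0 < rho -> 0 <= theta ->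
    (forall L : nat, 0 < d L) ->
    Un_cv (fun L => d L * INR L) theta ->
    List.Forall (fun m => List.Forall C3 (snd m)) P ->
    forall (Ls Ns : nat -> nat),
      (forall K : nat, exists m0 : nat, forall m : nat, (m0 <= m)%nat -> (K <= Ls m)%nat) ->
      (forall K : nat, exists m0 : nat, forall m : nat, (m0 <= m)%nat -> (K <= Ns m)%nat) ->
      Un_cv (fun n => INR (Ns n) / INR (Ls n)) rho ->
      forall eps : R, 0 < eps ->
        exists n0 : nat, forall n : nat, (n0 <= n)%nat ->
          forall eta : nat -> nat, nsum (Ls n) eta = Ns n ->
            Rabs (gen (Ls n) (d (Ls n))
                    (fun xi => H_eval (mu_eta (Ls n) (Ns n) xi) P) eta
                  - LH theta (mu_eta (Ls n) (Ns n) eta) P) <= eps.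
Proof.
  intros rho th d P Hrho Hth Hd Hcv HP Ls Ns HLs HNs _ eps Heps.
  destruct (poly_main th P HP) as [K [K1 [HK0 HK]]].
  set (t := eps / (3 * (K + 1))).
  assert (Ht : 0 < t) by (unfold t; apply Rdiv_lt_0_compat; lra).
  assert (HKt : 3 * K * t <= eps).
  { assert (Ht' : t * (3 * (K+1)) = eps) by (unfold t; field; lra). nra. }
  destruct (Hcv (Rmin 1 t) ltac:(apply Rmin_pos; lra)) as [N1 HN1].
  destruct (nat_above ((th + 1) / t)) as [L0 HL0].
  destruct (nat_above (Rmax 1 (Rmax K1 ((th + 2) / t)))) as [N0 HN0].
  destruct (HLs (Nat.max N1 L0)) as [m1 Hm1].
  destruct (HNs N0) as [m2 Hm2].
  exists (Nat.max m1 m2). intros n Hn eta Hs.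
  assert (HL : (Nat.max N1 L0 <= Ls n)%nat) by (apply Hm1; lia).
  assert (HN : (N0 <= Ns n)%nat) by (apply Hm2; lia).
  set (L := Ls n) in *. set (N := Ns n) in *. set (dd := d L).
  assert (HNr : Rmax 1 (Rmax K1 ((th + 2) / t)) <= INR N) by (eapply Rle_trans; [exact HN0|apply le_INR; auto]).
  assert (HN1' : 1 <= INR N) by (eapply Rle_trans; [apply Rmax_l|exact HNr]).
  assert (HNK : K1 <= INR N) by (eapply Rle_trans; [eapply Rle_trans; [apply Rmax_l|apply Rmax_r]|exact HNr]).
  assert (HN2 : (th + 2) / t <= INR N) by (eapply Rle_trans; [eapply Rle_trans; [apply Rmax_r|apply Rmax_r]|exact HNr]).
  assert (HLL0 : (th + 1) / t <= INR L) by (eapply Rle_trans; [exact HL0|apply le_INR; lia]).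
  assert (Hdl : Rabs (dd * INR L - th) < Rmin 1 t) by (apply (HN1 L); lia).
  assert (Hdl1 : Rabs (dd * INR L - th) < 1) by (eapply Rlt_le_trans; [exact Hdl|apply Rmin_l]).
  assert (Hdlt : Rabs (dd * INR L - th) < t) by (eapply Rlt_le_trans; [exact Hdl|apply Rmin_r]).
  apply Rabs_def2 in Hdl1. destruct Hdl1 as [Hdl1 Hdl2].
  assert (Hdpos : 0 < dd) by apply Hd.
  assert (HLpos : 0 < INR L).
  { eapply Rlt_le_trans; [|exact HLL0]. apply Rdiv_lt_0_compat; lra. }
  assert (Hdt : dd <= t).
  { apply (Rmult_le_reg_r (INR L)); auto.
    assert (th + 1 <= t * INR L).
    { apply (Rmult_le_compat_l t) in HLL0; [|lra]. unfold Rdiv in HLL0.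
      replace (t * ((th + 1) * / t)) with (th + 1) in HLL0 by (field; lra). lra. }
    lra. }
  assert (HNt : (1 + dd * INR L) / INR N <= t).
  { assert (th + 2 <= t * INR N).
    { apply (Rmult_le_compat_l t) in HN2; [|lra]. unfold Rdiv in HN2.
      replace (t * ((th + 2) * / t)) with (th + 2) in HN2 by (field; lra). lra. }
    apply (Rmult_le_reg_r (INR N)). lra. unfold Rdiv. rewrite Rmult_assoc, Rinv_l, Rmult_1_r by lra. lra. }
  eapply Rle_trans. apply (HK L N dd eta HN1' HNK); [lra|exact Hs].
  assert (Herq : errq th L (INR N) dd <= 3*t) by (unfold errq; lra).
  eapply Rle_trans. apply Rmult_le_compat_l; [exact HK0|exact Herq]. lra.
Qed.
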